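(* Let $N\ge 2$ be an integer and let $\boldsymbol{A}=(A_1,\dots,A_N)$ and $\boldsymbol{B}=(B_1,\dots,B_N)$ be probability vectors, i.e. $A_i\ge 0$, $B_i\ge 0$ for all $i$ and $\sum_{i=1}^N A_i=\sum_{i=1}^N B_i=1$. For $i=1,\dots,N$ put $S_i=A_i+B_i$. Suppose $S_i\le 1$ for all $i=1,\dots,N$. Then $L_{\min}=0$; that is, there exists a joint selection probability matrix $\boldsymbol{P}=(p_{i,j})_{i,j=1}^N$ with $$L(\boldsymbol{P})=\sum_{i=1}^N\Big(\sum_{j=1}^N p_{i,j}-A_i\Big)^2+\sum_{j=1}^N\Big(\sum_{i=1}^N p_{i,j}-B_j\Big)^2=0,$$ i.e. with $\sum_j p_{i,j}=A_i$ for all $i$ and $\sum_i p_{i,j}=B_j$ for all $j$.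
   Context: A joint selection probability matrix is an $N\times N$ real matrix $\boldsymbol{P}=(p_{i,j})$ with $p_{i,i}=0$ for all $i$, $p_{i,j}\ge 0$ for all $i,j$, and $\sum_{i,j}p_{i,j}=1$ (entry $p_{i,j}$ is the probability that player A selects arm $i$ and player B selects arm $j$). The satisfied preferences are $\pi_A(i)=\sum_j p_{i,j}$ and $\pi_B(j)=\sum_i p_{i,j}$, the loss is $L=\sum_i(\pi_A(i)-A_i)^2+\sum_j(\pi_B(j)-B_j)^2$, and $L_{\min}$ is the minimum of $L$ over all joint selection probability matrices. $S_i=A_i+B_i$ is called the popularity of arm $i$. *)

(* Defs.v *)
From mathcomp Require Import all_boot all_order all_algebra.
From mathcomp Require Import reals.
Set Implicit Arguments. Unset Strict Implicit. Unset Printing Implicit Defensive.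
Import Order.TTheory GRing.Theory Num.Theory.
Local Open Scope ring_scope.

Definition prob_vec (R : realType) (N : nat) (A : 'I_N -> R) : Prop :=
  (forall i, 0 <= A i) /\ \sum_(i < N) A i = 1.

Definition joint_sel_matrix (R : realType) (N : nat) (P : 'M[R]_N) : Prop :=
  (forall i, P i i = 0) /\ (forall i j, 0 <= P i j) /\
  \sum_(i < N) \sum_(j < N) P i j = 1.

Definition piA (R : realType) (N : nat) (P : 'M[R]_N) (i : 'I_N) : R :=
  \sum_(j < N) P i j.
Definition piB (R : realType) (N : nat) (P : 'M[R]_N) (j : 'I_N) : R :=
  \sum_(i < N) P i j.

Definition loss (R : realType) (N : nat) (A B : 'I_N -> R) (P : 'M[R]_N) : R :=
  \sum_(i < N) (piA P i - A i) ^+ 2 + \sum_(j < N) (piB P j - B j) ^+ 2.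

(* Main.v *)
Require Import Defs.
From mathcomp Require Import all_boot all_order all_algebra.
From mathcomp Require Import reals.
From mathcomp Require Import ring lra.
Import Order.TTheory GRing.Theory Num.Theory.
Local Open Scope ring_scope.

Section H.
Variable R : realType.
Variable N : nat.

Lemma sum_offdiag (F : 'I_N -> R) (i : 'I_N) :
  \sum_j (if i == j then 0 else F j) = \sum_j F j - F i.
Proof.
rewrite [in RHS](bigD1 i) //= (bigD1 i) //= eqxx add0r.
rewrite addrAC subrr add0r; apply: eq_bigr => j /negbTE.
by rewrite eq_sym => ->.
Qed.

Lemma sum_ind (x : R) (l : 'I_N) :
  \sum_j (if j == l then x else 0) = x.
Proof.
rewrite (bigD1 l) //= eqxx big1 ?addr0 // => j /negbTE -> //.
Qed.
End H.

Theorem theorem2p1 (R : realType) (N : nat) (A B : 'I_N -> R) :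
  (2 <= N)%N -> prob_vec A -> prob_vec B ->
  (forall i, A i + B i <= 1) ->
  exists P : 'M[R]_N, joint_sel_matrix P /\ loss A B P = 0 /\
    (forall i, piA P i = A i) /\ (forall j, piB P j = B j).
Proof.
move=> _ [A0 sA] [B0 sB] hS.
suff [P [Pd [P0 [PA PB]]]] : exists P : 'M[R]_N, (forall i, P i i = 0) /\
   (forall i j, 0 <= P i j) /\
    (forall i, piA P i = A i) /\ (forall j, piB P j = B j).
  exists P; split.
    split => //; split => //.
    rewrite -sA; apply: eq_bigr => i _; exact: PA.
  split => //; rewrite /loss big1 ?add0r; last by move=> i _; rewrite PA subrr expr0n.
  by rewrite big1 // => j _; rewrite PB subrr expr0n.
case: (pickP (fun l => A l + B l == 1)) => [l /eqP hl|nt].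
  exists (\matrix_(i, j) if i == j then 0 else if i == l then B j
                         else if j == l then A i else 0).
  split; first by move=> i; rewrite mxE eqxx.
  split.
    move=> i j; rewrite mxE; case: eqP => _ //; case: eqP => _ //; case: eqP => _ //.
  split.
    move=> i; rewrite /piA.
    under eq_bigr do rewrite mxE.
    rewrite sum_offdiag; case: (eqVneq i l) => [->|il].
      rewrite ?eqxx sB; lra.
    by rewrite sum_ind subr0.
  move=> j; rewrite /piB.
  under eq_bigr do rewrite mxE.
  have -> : \sum_i (if i == j then 0 else if i == l then B j
                         else if j == l then A i else 0)
        = \sum_i (if j == i then 0 else if i == l then B j
                         else if j == l then A i else 0).
    by apply: eq_bigr => i _; rewrite eq_sym.
  rewrite sum_offdiag; case: (eqVneq j l) => [->|jl].
    idtac.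
    have -> : \sum_i (if i == l then B l else A i) = \sum_i A i - A l + B l.
      rewrite (bigD1 l) //= eqxx [in RHS](bigD1 l) //=.
      have -> : \sum_(i | i != l) (if i == l then B l else A i) = \sum_(i | i != l) A i.
        by apply: eq_bigr => i /negbTE ->.
      ring.
    rewrite sA; lra.
  by rewrite sum_ind subr0.
have Sl : forall i, 0 < 1 - (A i + B i).
  move=> i; have ne : A i + B i != 1 by rewrite (nt i).
  by rewrite subr_gt0 lt_neqAle ne hS.
pose c := \sum_l A l * B l / (1 - (A l + B l)).
have c0 : 0 <= c.
  apply: sumr_ge0 => l _; apply: divr_ge0; [exact: mulr_ge0 | exact: ltW].
pose h := (2 * (1 + c))^-1.
pose q i := (1 - A i + B i) / (1 - (A i + B i)).
pose r j := (1 + A j - B j) / (1 - (A j + B j)).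
have A1 : forall i, A i <= 1.
  move=> i; have := hS i; have := B0 i; lra.
have B1 : forall i, B i <= 1.
  move=> i; have := hS i; have := A0 i; lra.
have sBr : \sum_j B j * r j = 1 + 2 * c.
  transitivity (\sum_j (B j + 2 * (A j * B j / (1 - (A j + B j))))).
    apply: eq_bigr => j _.
    rewrite /r; have := Sl j; move=> /lt0r_neq0 ne; field; exact: ne.
  by rewrite big_split /= sB /c mulr_sumr.
have sAq : \sum_i A i * q i = 1 + 2 * c.
  transitivity (\sum_j (A j + 2 * (A j * B j / (1 - (A j + B j))))).
    apply: eq_bigr => j _.
    rewrite /q; have := Sl j; move=> /lt0r_neq0 ne; field; exact: ne.
  by rewrite big_split /= sA /c mulr_sumr.
clearbody c.
have c1 : 1 + c != 0 by apply: lt0r_neq0; lra.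
exists (\matrix_(i, j) if i == j then 0 else h * A i * B j * (q i + r j)).
split; first by move=> i; rewrite mxE eqxx.
split.
  move=> i j; rewrite mxE; case: eqP => _ //.
  apply: mulr_ge0; [apply: mulr_ge0; [apply: mulr_ge0|]|].
  - rewrite /h invr_ge0; lra.
  - exact: A0.
  - exact: B0.
  - apply: addr_ge0; apply: divr_ge0.
    + have := A1 i; have := B0 i; lra.
    + exact: ltW.
    + have := B1 j; have := A0 j; lra.
    + exact: ltW.
split.
  move=> i; rewrite /piA.
  under eq_bigr do rewrite mxE.
  rewrite sum_offdiag.
  have -> : \sum_j h * A i * B j * (q i + r j) = h * A i * q i * \sum_j B j + h * A i * \sum_j (B j * r j).
    rewrite !mulr_sumr -big_split /=; apply: eq_bigr => j _; ring.
  rewrite sB sBr /h /q /r; have := Sl i; move=> /lt0r_neq0 ne.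
  by field; rewrite ne c1.
move=> j; rewrite /piB.
under eq_bigr do rewrite mxE.
have -> : \sum_i (if i == j then 0 else h * A i * B j * (q i + r j))
        = \sum_i (if j == i then 0 else h * A i * B j * (q i + r j)).
  by apply: eq_bigr => i _; rewrite eq_sym.
rewrite sum_offdiag.
have -> : \sum_i h * A i * B j * (q i + r j) = h * B j * \sum_i (A i * q i) + h * B j * r j * \sum_i A i.
  rewrite !mulr_sumr -big_split /=; apply: eq_bigr => i _; ring.
rewrite sA sAq /h /q /r; have := Sl j; move=> /lt0r_neq0 ne.
by field; rewrite ne c1.
Qed.
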